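(* Let $k\ge 0$ and $d\ge 1$ be integers. A vector $\mathfrak{c}=(c_1,\ldots,c_d)\in\mathbb{N}^d$ is the clique vector of a $k$-connected chordal graph if and only if the vector $\mathfrak{b}=(b_1,\ldots,b_d)$ defined by the polynomial identity \[ \sum_{i=1}^d b_i x^{i-1}=\sum_{i=1}^d c_i (x-1)^{i-1} \] has all components positive, $d\ge k$, and $b_1=b_2=\cdots=b_k=1$.
   Context: All graphs are finite and simple. The clique vector $\mathfrak{c}(G)$ of a graph $G$ is $(c_1,\ldots,c_d)$, where $c_i$ is the number of cliques (complete subgraphs) of $G$ with exactly $i$ vertices and $d$ is the largest cardinality of a clique in $G$ (the clique number). A graph is $k$-connected if it has at least $k$ vertices and removing any set of fewer than $k$ vertices yields a connected graph; by convention every graph is $0$-connected. A graph is chordal if every cycle of length at least $4$ has a chord. *)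

(* Defs.v *)
From HB Require Import structures.
From mathcomp Require Import all_boot all_order all_algebra.
Set Implicit Arguments. Unset Strict Implicit. Unset Printing Implicit Defensive.
Import Order.TTheory GRing.Theory Num.Theory.

Section Graphs.
Variable T : finType.
Variable e : rel T.

Definition simple_graph : Prop := symmetric e /\ irreflexive e.

Definition is_clique (S : {set T}) : bool :=
  [forall x in S, forall y in S, (x != y) ==> e x y].

Definition num_cliques (i : nat) : nat :=
  #|[set S : {set T} | is_clique S & #|S| == i]|.

Definition clique_number : nat := \max_(S : {set T} | is_clique S) #|S|.

Definition clique_vector : seq nat :=
  [seq num_cliques i | i <- iota 1 clique_number].

Definition induced_connected (A : {set T}) : Prop :=
  forall x y, x \in A -> y \in A ->
    connect [rel u v | [&& e u v, u \in A & v \in A]] x y.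

Definition k_connected (k : nat) : Prop :=
  k <= #|T| /\ forall S : {set T}, #|S| < k -> induced_connected (~: S).

(* chordal: every cycle (distinct vertices s_0,...,s_{m-1}, m >= 4, with
   consecutive vertices and s_{m-1}, s_0 adjacent) has a chord, i.e. an
   edge between two cycle vertices that are not consecutive on the cycle *)
Definition chordal : Prop :=
  forall (x : T) (s : seq T), let c := x :: s in
    uniq c -> 4 <= size c -> cycle e c ->
    exists i j, [/\ i < j, j < size c, j != i.+1,
                    ~~ ((i == 0) && (j == (size c).-1)) &
                    e (nth x c i) (nth x c j)].
End Graphs.

(* b-polynomial: sum_i b_i x^(i-1) = sum_i c_i (x-1)^(i-1); b_i = coefficient i-1 *)
Definition bpoly (c : seq nat) : {poly int} :=
  (\sum_(i < size c) ((nth 0 c i)%:Z)%:P * ('X - 1) ^+ i)%R.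

(* Main.v *)
Require Import Defs.
From HB Require Import structures.
From mathcomp Require Import all_boot all_order all_algebra.
From mathcomp Require Import zify.
Set Implicit Arguments. Unset Strict Implicit. Unset Printing Implicit Defensive.
Import Order.TTheory GRing.Theory Num.Theory.

Section G.
Variable T : finType.
Variable e : rel T.
Hypothesis esym : symmetric e.
Hypothesis eirr : irreflexive e.

Lemma cliqueP (S : {set T}) :
  reflect (forall x y, x \in S -> y \in S -> x != y -> e x y) (is_clique e S).
Proof.
apply: (iffP forall_inP) => [H x y xS yS nxy | H x xS].
- by move: (H x xS) => /forall_inP /(_ y yS) /implyP; apply.
- apply/forall_inP => y yS; apply/implyP; exact: H.
Qed.

Lemma clique_sub (S S' : {set T}) : S' \subset S -> is_clique e S -> is_clique e S'.
Proof.
move=> sub /cliqueP H; apply/cliqueP => x y xS yS; apply: H; exact: (subsetP sub).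
Qed.

Definition nbh (A : {set T}) v := [set u in A | e v u].
Definition simplicial (A : {set T}) v := (v \in A) && is_clique e (nbh A v).
Definition Cl (A : {set T}) j :=
  [set S : {set T} | (S \subset A) && is_clique e S && (#|S| == j)].
Definition cl A j := #|Cl A j|.
Definition P (A : {set T}) : {poly int} :=
  (\sum_(i < #|T|.+1) ((cl A i.+1)%:Z)%:P * ('X - 1) ^+ i)%R.

Lemma v_notin_nbh A v : v \notin nbh A v.
Proof. by rewrite inE eirr andbF. Qed.

Lemma cl_remove A v i : simplicial A v ->
  cl A i.+1 = cl (A :\ v) i.+1 + 'C(#|nbh A v|, i).
Proof.
case/andP=> vA cN.
rewrite /cl -(cardsID [set S : {set T} | v \in S] (Cl A i.+1)) addnC.
congr (_ + _).
  apply: eq_card => S; rewrite !inE subsetD1.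
  by case: (v \in S); rewrite /= ?andbF ?andbT //.
rewrite -cards_draws -(card_in_imset (f := fun S => v |: S)
   (D := [set S' : {set T} | S' \subset nbh A v & #|S'| == i])); last first.
  move=> S1 S2; rewrite !inE => /andP[s1 _] /andP[s2 _] E.
  have h1 : v \notin S1.
    by apply/negP => /(subsetP s1); rewrite (negbTE (v_notin_nbh A v)).
  have h2 : v \notin S2.
    by apply/negP => /(subsetP s2); rewrite (negbTE (v_notin_nbh A v)).
  by rewrite -(setU1K h1) -(setU1K h2) E.
apply: eq_card => S; rewrite !inE; apply/idP/imsetP.
- case/andP=> /andP[/andP[SA cS] /eqP cardS] vS; exists (S :\ v).
    rewrite inE; apply/andP; split.
      apply/subsetP => u; rewrite !inE => /andP[uv uS].
      rewrite (subsetP SA _ uS) /=; move/cliqueP: cS; apply => //.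
      by rewrite eq_sym.
    by move: cardS; rewrite (cardsD1 v S) vS add1n => -[->].
  by rewrite setD1K.
- case=> S'; rewrite inE => /andP[sub /eqP cS'] ->.
  rewrite setU11 andbT cardsU1 cS'.
  have vS' : v \notin S'.
    by apply/negP => /(subsetP sub); rewrite (negbTE (v_notin_nbh A v)).
  rewrite vS' eqxx andbT; apply/andP; split.
    rewrite subUset sub1set vA /=; apply: subset_trans sub _.
    by apply/subsetP => u; rewrite inE => /andP[].
  apply/cliqueP => x y; rewrite !inE => /orP[/eqP->|xS] /orP[/eqP->|yS].
  + by rewrite eqxx.
  + by move=> _; move/subsetP: sub => /(_ y yS); rewrite inE => /andP[].
  + by move=> _; move/subsetP: sub => /(_ x xS); rewrite inE esym => /andP[].
  + by apply: (cliqueP _ cN); apply: (subsetP sub).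
Qed.

Lemma polyC_nat (n : nat) : (((n%:Z)%:P : {poly int}) = n%:R)%R.
Proof. by rewrite -natz polyC_natr. Qed.

Lemma P_remove A v : simplicial A v -> (P A = P (A :\ v) + 'X^#|nbh A v|)%R.
Proof.
move=> sv; set s := #|nbh A v|.
have hs : s < #|T|.+1 by rewrite ltnS max_card.
have -> : (('X^s : {poly int}) =
    \sum_(i < #|T|.+1) (('C(s,i))%:Z)%:P * ('X-1)^+i)%R.
  rewrite -{1}(subrK 1 'X)%R exprD1n (big_ord_widen #|T|.+1 (fun i => ('X-1)^+i *+ 'C(s,i))%R) //.
  rewrite big_mkcond /=; apply: eq_bigr => i _; case: ifP => hi.
    by rewrite polyC_nat mulr_natl.
  by rewrite bin_small ?mul0r //; rewrite ltnNge -ltnS hi.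
rewrite /P -big_split /=; apply: eq_bigr => i _.
by rewrite (cl_remove i sv) PoszD polyCD mulrDl.
Qed.

Lemma P_clique n (K : {set T}) : #|K| = n -> is_clique e K -> (P K = \sum_(t < n) 'X^t)%R.
Proof.
elim: n K => [|n IH] K hK cK.
  move/eqP: hK; rewrite cards_eq0 => /eqP ->; rewrite big_ord0 /P big1 // => i _.
  rewrite /cl (_ : Cl _ _ = set0) ?cards0 ?mul0r //.
  apply/setP => S; rewrite !inE subset0; apply/negP => /andP[/andP[/eqP -> _]].
  by rewrite cards0.
have [v vK] : exists v, v \in K.
  by apply/set0Pn; rewrite -card_gt0 hK.
have eN : nbh K v = K :\ v.
  apply/setP => u; rewrite !inE; case: (u =P v) => [->|/eqP uv]; first by rewrite eirr andbF.
  case uK: (u \in K) => //=; apply: (cliqueP _ cK) => //; by rewrite eq_sym.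
have sv : simplicial K v by rewrite /simplicial vK eN (clique_sub (subD1set K v) cK).
rewrite (P_remove sv) (IH (K :\ v)) ?big_ord_recr /=; last first.
- exact: clique_sub (subD1set K v) cK.
- by move: hK; rewrite (cardsD1 v K) vK add1n => -[].
by rewrite eN; congr (_ + 'X^_)%R; move: hK; rewrite (cardsD1 v K) vK add1n => -[].
Qed.

Definition Rr (C : {set T}) (y : T) : rel T := fun u v => e u v && ((v \in C) || (v == y)).

Lemma last_take (x : T) r i : i <= size r -> last x (take i r) = nth x (x :: r) i.
Proof.
elim: r x i => [|a r IH] x [|i] //= h.
rewrite IH; last by lia.
by apply: set_nth_default; rewrite /=; lia.
Qed.

Lemma path_targets (R : rel T) (Q : pred T) x r :
  (forall u v, R u v -> Q v) -> path R x r -> all Q r.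
Proof.
move=> H; elim: r x => //= a r IH x /andP[h1 h2]; rewrite (H _ _ h1) /=; exact: IH h2.
Qed.

Lemma shortcut (R : rel T) x r i j : i < j -> j < size r -> path R x r ->
  R (nth x (x::r) i) (nth x r j) ->
  [/\ path R x (take i r ++ drop j r), last x (take i r ++ drop j r) = last x r
    & size (take i r ++ drop j r) < size r].
Proof.
move=> ij jr pr Rij.
have ir : i <= size r by lia.
have dj : drop j r = nth x r j :: drop j.+1 r by rewrite (drop_nth x).
have pj : path R (nth x r j) (drop j.+1 r).
  by move: pr; rewrite -{1}(cat_take_drop j.+1 r) cat_path => /andP[_]; rewrite last_take.
have lj : last x r = last (nth x r j) (drop j.+1 r).
  by rewrite -{1}(cat_take_drop j.+1 r) last_cat last_take.
have pi : path R x (take i r).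
  by move: pr; rewrite -{1}(cat_take_drop i r) cat_path => /andP[pi _].
split.
- by rewrite cat_path last_take // dj /= Rij pj pi.
- by rewrite last_cat last_take // dj /= lj.
- rewrite size_cat size_takel // size_drop; lia.
Qed.

Definition chordless (x : T) (r : seq T) :=
  forall i j, i < j -> j < size r -> ~~ e (nth x (x::r) i) (nth x r j).

Lemma edge_nth x r t : path e x r -> t < size r -> e (nth x (x::r) t) (nth x r t).
Proof. by move/(pathP x) => H /H. Qed.

Lemma uniq_chordless x r : path e x r -> x != last x r -> chordless x r -> uniq (x :: r).
Proof.
move=> pr xl ch; apply: contraT => /(uniqPn x) [i [j [ij js eij]]].
case: j ij js eij => // j ij js eij.
rewrite /= ltnS in js.
case: (ltnP j.+1 (size r)) => hj.
  have E := edge_nth pr hj.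
  rewrite /= in E eij; rewrite -eij in E.
  by move: (ch i j.+1 ij hj); rewrite E.
have sr : size r = j.+1 by lia.
case: i ij eij => [|i] ij eij.
  by move: xl; rewrite (last_nth x) sr /=; rewrite /= in eij; rewrite -eij eqxx.
have ir : i < size r by lia.
have E := edge_nth pr ir.
rewrite /= in eij; rewrite eij in E.
by move: (ch i j ij js); rewrite E.
Qed.

Lemma chordless_cycle (C : {set T}) x y b r : chordal e -> x != y -> ~~ e x y ->
  e b x -> e b y -> b \notin C -> (forall c, c \in C -> ~~ e b c) ->
  path (Rr C y) x r -> last x r = y -> False.
Proof.
move=> ch xy nxy bx bY bC nbC.
have [n] := ubnP (size r); elim: n r => // n IH r /ltnSE hr pr lr.
have Qr : all [pred v | (v \in C) || (v == y)] r.
  by apply: (path_targets _ pr) => u v /andP[].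
case: (boolP [exists i : 'I_(size r), exists j : 'I_(size r),
                (i < j) && e (nth x (x::r) i) (nth x r j)]).
  case/existsP => i /existsP [j /andP[ij eij]].
  have Rij : Rr C y (nth x (x::r) i) (nth x r j).
    by rewrite /Rr eij /=; exact: (allP Qr _ (mem_nth x (ltn_ord j))).
  case: (shortcut ij (ltn_ord j) pr Rij) => p' l' s'.
  by apply: (IH _ _ p'); [lia | rewrite l'].
move=> nch.
have chl : chordless x r.
  move=> i j ij jr; apply/negP => E; move/negP: nch; apply; apply/existsP.
  have ir : i < size r by lia.
  by exists (Ordinal ir); apply/existsP; exists (Ordinal jr); rewrite /= ij E.
clear nch IH.
have pe : path e x r by apply: sub_path pr => u v /andP[].
have lr' : x != last x r by rewrite lr.
have ur := uniq_chordless pe lr' chl.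
have r2 : 1 < size r.
  move: pr lr; case: (r) => [|z [|w r']] //=.
  - by move=> _ E; rewrite E eqxx in xy.
  - by rewrite andbT => /andP[exz _] E; rewrite -E exz in nxy.
have bnr : b \notin x :: r.
  rewrite in_cons negb_or; apply/andP; split.
    by apply/eqP => E; rewrite E eirr in bx.
  apply/negP => /(allP Qr) /= /orP[bc|/eqP E]; first by rewrite bc in bC.
  by rewrite E eirr in bY.
have U : uniq (b :: x :: r) by rewrite cons_uniq bnr ur.
have S4 : 4 <= size (b :: x :: r) by [].
have CY : cycle e (b :: x :: r).
  by rewrite /= rcons_path pe lr bx (esym y b) bY.
have := ch b (x :: r); cbv zeta.
case/(_ U S4 CY) => i [j [ij jc jn nlast E]].
case: i ij jn nlast E => [|i] ij jn nlast E.
  case: j ij jc jn nlast E => [|[|j]] // _ jc _ nlast E.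
  rewrite /= in jc nlast E.
  have j1 : j.+1 < size r by move: jc nlast; clear; lia.
  have jr : j < size r by apply: ltnW.
  move: (allP Qr _ (mem_nth b jr)) => /= /orP[wC|/eqP wy].
    by move: (nbC _ wC); rewrite E.
  have e1 : nth x (x::r) j.+1 = y by rewrite /= (set_nth_default b x jr) wy.
  have e2 : nth x (x::r) (size r) = y by rewrite -(last_nth x) lr.
  have h1 : j.+1 < size (x :: r) by rewrite /= ltnS ltnW.
  have h2 : size r < size (x :: r) by [].
  have := nth_uniq x h1 h2 ur.
  rewrite e1 e2 eqxx => h; have : j.+1 == size r by rewrite -h.
  by move/eqP => h3; rewrite h3 ltnn in j1.
case: j ij jc jn nlast E => [|[|j]] // ij jc jn _ E.
rewrite /= in ij jc jn E.
have jr : j < size r by move: jc; clear; lia.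
have ij' : i < j by move: ij jn; clear; lia.
have ir : i < size (x :: r) by rewrite /= ltnS; apply: ltnW; apply: ltn_trans ij' jr.
rewrite (set_nth_default x b ir) (set_nth_default x b jr) in E.
by move: (chl i j ij' jr); rewrite E.
Qed.

Lemma not_clique_pair (A : {set T}) : ~~ is_clique e A ->
  exists a b, [/\ a \in A, b \in A, a != b & ~~ e a b].
Proof.
case/forall_inPn => a aA /forall_inPn [b bA]; rewrite negb_imply => /andP[ab nab].
by exists a, b.
Qed.

Lemma two_simp (A : {set T}) :
  (forall a b, a \in A -> b \in A -> a != b -> ~~ e a b ->
     exists v, [/\ simplicial A v, v != b & ~~ e v b]) ->
  ~~ is_clique e A ->
  exists v1 v2, [/\ simplicial A v1, simplicial A v2, v1 != v2 & ~~ e v1 v2].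
Proof.
move=> H /not_clique_pair [a [b [aA bA ab nab]]].
have [v1 [s1 v1b nv1b]] := H a b aA bA ab nab.
have v1A : v1 \in A by case/andP: s1.
have b1 : b != v1 by rewrite eq_sym.
have nb1 : ~~ e b v1 by rewrite esym.
have [v2 [s2 v21 nv21]] := H b v1 bA v1A b1 nb1.
by exists v2, v1; split.
Qed.

Lemma dirac : chordal e -> forall n (A : {set T}), #|A| < n ->
  forall a b, a \in A -> b \in A -> a != b -> ~~ e a b ->
  exists v, [/\ simplicial A v, v != b & ~~ e v b].
Proof.
move=> ch; elim=> // n IH A hA a b aA bA ab nab.
set B := A :\: (b |: nbh A b).
set RB : rel T := fun u w => [&& e u w, u \in B & w \in B].
set C := [set z in B | connect RB a z].
set S := [set s in A :\: C | [exists c in C, e s c]].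
set A' := C :|: S.
have inB u : (u \in B) = [&& u \in A, u != b & ~~ e b u].
  rewrite !inE; case: (u \in A); case: (u == b); case: (e b u); by [].
have inC z : (z \in C) = (z \in B) && connect RB a z by rewrite /C in_set.
have inS z : (z \in S) = ((z \notin C) && (z \in A)) && [exists c in C, e z c].
  by rewrite /S in_set in_setD.
have inA' z : (z \in A') = (z \in C) || (z \in S) by rewrite /A' in_setU.
clearbody A' S C B.
have aB : a \in B by rewrite inB aA ab /= esym nab.
have aC : a \in C by rewrite inC aB connect0.
have CB : C \subset B by apply/subsetP => z; rewrite inC => /andP[].
have RBsym : symmetric RB.
  move=> u w; rewrite /RB esym; case: (u \in B); case: (w \in B); by [].
have closedC u w : u \in C -> e u w -> w \in B -> w \in C.
  rewrite !inC => /andP[uB cu] uw wB; rewrite wB /=.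
  by apply: connect_trans cu (connect1 _); rewrite /RB uw uB wB.
have nbC c : c \in C -> ~~ e b c.
  by move/(subsetP CB); rewrite inB => /and3P[].
have bC : b \notin C.
  by apply/negP => /(subsetP CB); rewrite inB eqxx andbF.
have SN s : s \in S -> (s \in A) && e b s.
  rewrite inS => /andP[/andP[sC sA] /existsP[c /andP[cC sc]]].
  rewrite sA /=; case sB : (s \in B).
    have sC' : s \in C by apply: (closedC c) => //; rewrite esym.
    by rewrite sC' in sC.
  move: sB; rewrite inB sA /=; case: (s =P b) => [sb | _] /=.
    by move: (nbC c cC); rewrite -sb sc.
  by move/negbFE.
have bA' : b \notin A'.
  rewrite inA' negb_or bC /=; apply/negP => /SN /andP[_]; by rewrite eirr.
have A'A : A' \subset A.
  apply/subsetP => z; rewrite inA' => /orP[/(subsetP CB)|/SN/andP[]//].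
  by rewrite inB => /and3P[].
have hA' : #|A'| < n.
  have : A' \subset A :\ b by rewrite subsetD1 A'A bA'.
  move/subset_leq_card; move: hA; rewrite (cardsD1 b A) bA add1n.
  move=> h1 h2; move: h1 h2; clear; lia.
have cS : is_clique e S.
  apply/cliqueP => x y xS yS xy; apply/negPn/negP => nxy.
  move: (xS) (yS) => /SN/andP[xA bx] /SN/andP[yA bY].
  move: xS yS; rewrite !inS => /andP[_ /existsP[cx /andP[cxC xcx]]]
                                /andP[_ /existsP[cy /andP[cyC ycy]]].
  have : connect RB cx cy.
    apply: (connect_trans (_ : connect RB cx a)).
      by rewrite (sym_connect_sym RBsym); move: cxC; rewrite inC => /andP[].
    by move: cyC; rewrite inC => /andP[].
  case/connectP => p pp lp.
  have pC : forall u q, u \in C -> path RB u q -> path (Rr C y) u q.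
    move=> u q; elim: q u => //= w q IHq u uC /andP[/and3P[uw _ wB] pq].
    have wC := closedC u w uC uw wB.
    by rewrite /Rr uw wC /=; apply: IHq.
  apply: (chordless_cycle (C:=C) (r := cx :: rcons p y) ch xy nxy bx bY bC nbC).
    rewrite /= rcons_path -lp (pC _ _ cxC pp) /Rr xcx cxC /= eqxx orbT andbT.
    by rewrite esym ycy.
  by rewrite /= last_rcons.
have nbhC v : v \in C -> nbh A' v = nbh A v.
  move=> vC; apply/setP => u; rewrite /nbh !in_set.
  apply/andP/andP => -[uin evu]; split => //.
    exact: (subsetP A'A).
  case uC: (u \in C); first by rewrite inA' uC.
  rewrite inA'; apply/orP; right; rewrite inS uC uin /=.
  by apply/existsP; exists v; rewrite vC esym evu.
have goodC v : v \in C -> simplicial A' v -> exists v, [/\ simplicial A v, v != b & ~~ e v b].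
  move=> vC /andP[_ cv]; exists v; split.
  - by rewrite /simplicial -nbhC // cv andbT (subsetP A'A) // inA' vC.
  - by apply/negP => /eqP vb; rewrite -vb vC in bC.
  - by rewrite esym nbC.
case: (boolP (is_clique e A')) => cA'.
  apply: (goodC a aC); rewrite /simplicial inA' aC /=.
  by apply: clique_sub cA'; apply/subsetP => u; rewrite /nbh in_set => /andP[].
have [v1 [v2 [s1 s2 v12 nv12]]] :=
  two_simp (fun a b aA bA ab nab => IH A' hA' a b aA bA ab nab) cA'.
case v1C : (v1 \in C); first exact: (goodC v1).
case v2C : (v2 \in C); first exact: (goodC v2).
have v1S : v1 \in S by move: s1 => /andP[]; rewrite inA' v1C.
have v2S : v2 \in S by move: s2 => /andP[]; rewrite inA' v2C.
by rewrite (cliqueP _ cS v1 v2 v1S v2S v12) in nv12.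
Qed.

Lemma simp_outside (A K : {set T}) : chordal e -> K \subset A -> is_clique e K ->
  ~~ (A \subset K) -> exists2 v, v \in A :\: K & simplicial A v.
Proof.
move=> ch KA cK /subsetPn [z zA zK].
case: (boolP (is_clique e A)) => cA.
  exists z; first by rewrite inE zK zA.
  by rewrite /simplicial zA; apply: clique_sub cA; apply/subsetP => u; rewrite /nbh in_set => /andP[].
have [v1 [v2 [s1 s2 v12 nv12]]] :=
  two_simp (fun a b aA bA ab nab => dirac ch (ltnSn #|A|) aA bA ab nab) cA.
case v1K : (v1 \in K).
  case v2K : (v2 \in K).
    by rewrite (cliqueP _ cK v1 v2 v1K v2K v12) in nv12.
  by exists v2 => //; rewrite inE v2K; case/andP: s2.
by exists v1 => //; rewrite inE v1K; case/andP: s1.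
Qed.

Definition kconn (A : {set T}) k :=
  k <= #|A| /\ forall S : {set T}, #|S| < k -> induced_connected e (A :\: S).

Lemma conn_remove (D : {set T}) v :
  (forall u w, u \in D -> w \in D -> e v u -> e v w -> u != w -> e u w) ->
  induced_connected e D -> induced_connected e (D :\ v).
Proof.
move=> cl cD x y xD yD.
have xD' : x \in D by move: xD; rewrite in_setD1 => /andP[].
have yD' : y \in D by move: yD; rewrite in_setD1 => /andP[].
have [p pp lp] := connectP (cD x y xD' yD').
rewrite lp; rewrite lp in yD; clear lp xD' yD'.
have [n] := ubnP (size p); elim: n x p xD pp yD => // n IH x [|u p] xD pp lD /ltnSE hp.
  exact: connect0.
move: pp => /= /andP[/and3P[exu xD' uD] pp].
case: (u =P v) => [uv|/eqP uv].
  rewrite uv in exu pp lD *.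
  case: p hp pp lD => [|w p] hp pp lD.
    by rewrite /= in lD; rewrite in_setD1 eqxx in lD.
  move: pp => /= /andP[/and3P[evw _ wD] pp].
  rewrite /= in lD *.
  case: (w =P x) => [wx|/eqP wx].
    rewrite wx in pp lD *; apply: (IH x p xD pp lD).
    by move: hp; rewrite /=; clear; lia.
  have exw : e x w.
    apply: cl => //; by [rewrite esym | rewrite eq_sym].
  have pp' : path [rel u w | [&& e u w, u \in D & w \in D]] x (w :: p).
    by rewrite /= exw xD' wD.
  rewrite /=; apply: (IH x (w :: p) xD pp' lD).
  by move: hp; rewrite /=; clear; lia.
have uD' : u \in D :\ v by rewrite in_setD1 uv uD.
have hp' : size p < n by move: hp; rewrite /=; clear; lia.
apply: connect_trans (connect1 _) (IH u p uD' pp lD hp').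
by rewrite /= exu xD uD'.
Qed.

Lemma kconn_remove A v k : kconn A k -> simplicial A v -> k <= #|nbh A v| ->
  kconn (A :\ v) k.
Proof.
move=> [kA cA] /andP[vA cN] kN; split.
  apply: leq_trans kN _; apply: subset_leq_card; apply/subsetP => u.
  rewrite /nbh in_set in_setD1 => /andP[uA evu].
  rewrite uA andbT; apply/negP => /eqP uv; by rewrite uv eirr in evu.
move=> S hS.
have -> : (A :\ v) :\: S = (A :\: S) :\ v.
  apply/setP => z; rewrite !inE; by case: (z == v); case: (z \in S).
apply: conn_remove (cA S hS).
move=> u w; rewrite !in_setD => /andP[_ uA] /andP[_ wA] evu evw uw.
by apply: (cliqueP _ cN) => //; rewrite /nbh in_set ?uA ?wA.
Qed.

Lemma fwd (K : {set T}) k : chordal e -> is_clique e K ->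
  (forall S, is_clique e S -> #|S| <= #|K|) ->
  forall n (A : {set T}), #|A| < n -> K \subset A -> kconn A k ->
  exists l : seq nat,
    [/\ all (leq k) l, (P A = P K + \sum_(s <- l) 'X^s)%R & k <= #|K|].
Proof.
move=> ch cK Kmax; elim=> // n IH A hA KA kA.
case: (boolP (A \subset K)) => AK.
  have AK' : A = K by apply/eqP; rewrite eqEsubset AK KA.
  exists [::]; rewrite big_nil addr0 AK'; split => //.
  by case: kA; rewrite AK'.
have [v vAK sv] := simp_outside ch KA cK AK.
move: vAK; rewrite in_setD => /andP[vK vA].
have kN : k <= #|nbh A v|.
  rewrite leqNgt; apply/negP => lt.
  case: kA => _ /(_ _ lt) cc.
  have : ~~ (K \subset nbh A v).
    apply/negP => KN.
    have cvK : is_clique e (v |: K).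
      apply/cliqueP => x y; rewrite !inE => /orP[/eqP->|xK] /orP[/eqP->|yK] xy.
      + by rewrite eqxx in xy.
      + by move/(subsetP KN): yK; rewrite /nbh in_set => /andP[].
      + by move/(subsetP KN): xK; rewrite /nbh in_set esym => /andP[].
      + by apply: (cliqueP _ cK).
    by move: (Kmax _ cvK); rewrite cardsU1 vK add1n ltnn.
  case/subsetPn => w wK wN.
  have wA : w \in A := subsetP KA w wK.
  have vD : v \in A :\: nbh A v by rewrite in_setD v_notin_nbh vA.
  have wD : w \in A :\: nbh A v by rewrite in_setD wN wA.
  have := cc v w vD wD; case/connectP => -[|u p] /=.
    by move=> _ wv; rewrite wv (negbTE vK) in wK.
  case/andP => /and3P[evu _ uD] _ _.
  by move: uD; rewrite in_setD /nbh in_set evu andbT; case: (u \in A).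
have kA' := kconn_remove kA sv kN.
have KA' : K \subset A :\ v by rewrite subsetD1 KA vK.
have hA' : #|A :\ v| < n.
  by move: hA; rewrite (cardsD1 v A) vA add1n ltnS.
have [l [al eP kK]] := IH _ hA' KA' kA'.
exists (#|nbh A v| :: l); split => //; first by rewrite /= kN al.
by rewrite (P_remove sv) eP big_cons -addrA (addrC (\sum_(s <- l) _)%R).
Qed.

Lemma coef_geom n i : ((\sum_(t < n) 'X^t : {poly int})`_i = (i < n)%:R)%R.
Proof.
rewrite coef_sum; case: (ltnP i n) => h.
  rewrite (bigD1 (Ordinal h)) //= coefXn eqxx big1 ?addr0 // => t tne.
  rewrite coefXn; case: eqP => // it; move: tne; by rewrite -val_eqE /= it eqxx.
by rewrite big1 // => t _; rewrite coefXn; case: eqP => // it; move: (ltn_ord t); rewrite -it ltnNge h.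
Qed.

Lemma forward_main k : chordal e -> kconn setT k ->
  [/\ forall i, i < clique_number e -> (0 < (P setT)`_i)%R, k <= clique_number e &
      forall i, i < k -> ((P setT)`_i = 1)%R].
Proof.
move=> ch kA.
case: (@arg_maxnP _ set0 (fun S => is_clique e S) (fun S => #|S|)).
  by apply/cliqueP => x y; rewrite inE.
move=> K cK Kmax.
have dK : #|K| = clique_number e.
  apply/eqP; rewrite eqn_leq (leq_bigmax_cond (P := fun S => is_clique e S) _ cK)/=.
  by apply/bigmax_leqP => S cS; apply: Kmax.
have [l [al eP kK]] := fwd ch cK Kmax (ltnSn _) (subsetT K) kA.
rewrite (P_clique (erefl _) cK) in eP.
have coefP i : ((P setT)`_i = (i < #|K|)%:R + \sum_(s <- l) (('X^s : {poly int})`_i))%R.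
  by rewrite eP coefD coef_geom coef_sum.
have nn i : (0 <= \sum_(s <- l) (('X^s : {poly int})`_i))%R.
  by apply: sumr_ge0 => s _; rewrite coefXn ler0n.
have z i : i < k -> (\sum_(s <- l) (('X^s : {poly int})`_i) = 0)%R.
  move=> ik; apply: big1_seq => s /andP[_ sl]; rewrite coefXn.
  have ks : k <= s := allP al s sl.
  case: (i =P s) => [his|_]; last by [].
  by move: ik; rewrite his ltnNge ks.
split.
- move=> i hi; rewrite coefP dK hi mulr1n.
  by apply: lt_le_trans (ltr01) _; rewrite lerDl nn.
- by rewrite -dK.
- move=> i hi; rewrite coefP z // addr0.
  by rewrite (leq_trans hi kK).
Qed.

Lemma P_bpoly : P setT = bpoly (clique_vector e).
Proof.
set d := clique_number e.
have dT : d <= #|T| by apply/bigmax_leqP => S _; apply: max_card.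
have cl0 i : d <= i -> cl setT i.+1 = 0.
  move=> di; apply: eq_card0 => S; rewrite inE; apply/negP => /andP[/andP[_ cS] /eqP cardS].
  move: (leq_bigmax_cond (F := fun S => #|S|) (P := fun S => is_clique e S) _ cS).
  by rewrite cardS -/d ltnNge di.
rewrite /bpoly size_map size_iota.
rewrite /P (big_ord_widen #|T|.+1 (fun i => ((nth 0 (clique_vector e) i)%:Z)%:P * ('X - 1) ^+ i)%R) ?ltnS //.
rewrite [in RHS]big_mkcond /=; apply: eq_bigr => i _; case: ifP => hi.
  rewrite /clique_vector (nth_map 0) ?size_iota // nth_iota // add1n.
  congr (((_)%:Z)%:P * _)%R; apply: eq_card => S; rewrite !inE subsetT.
  by [].
by rewrite cl0 ?mul0r //; rewrite leqNgt hi.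
by apply: (leq_trans dT).
Qed.

Lemma exists_max (f : nat -> nat) L : 0 < L ->
  exists2 m, m < L & forall t, t < L -> f t <= f m.
Proof.
elim: L => // -[|L] IH _.
  by exists 0 => // t; rewrite ltnS leqn0 => /eqP ->.
have [m mL H] := IH isT.
case: (leqP (f L.+1) (f m)) => h.
  exists m; first exact: ltnW.
  move=> t; rewrite ltnS leq_eqVlt => /orP[/eqP->//|]; apply: H.
exists L.+1 => // t; rewrite ltnS leq_eqVlt => /orP[/eqP->//|/H ht].
exact: leq_trans ht (ltnW h).
Qed.

Lemma peo_chordal (r : T -> nat) : injective r ->
  (forall u v w, e u w -> e v w -> r u < r w -> r v < r w -> u != v -> e u v) ->
  chordal e.
Proof.
move=> rinj H x s; cbv zeta => U S4 CY.
set c := x :: s.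
have CYn := pathP x CY.
have E1 t : t < size s -> e (nth x c t) (nth x c t.+1).
  move=> ht; have := CYn t; rewrite size_rcons ltnS => /(_ (ltnW ht)).
  by rewrite -rcons_cons !nth_rcons /= ltnS (ltnW ht) ht.
have E2 : e (nth x c (size s)) x.
  have := CYn (size s); rewrite size_rcons ltnSn => /(_ isT).
  by rewrite -rcons_cons !nth_rcons /= ltnSn ltnn eqxx.
have s3 : 3 <= size s by [].
have [m mL Hm] := exists_max (fun t => r (nth x c t)) (ltn0Sn (size s)).
have strict t : t < size c -> t != m -> r (nth x c t) < r (nth x c m).
  move=> tc tm; rewrite ltn_neqAle Hm // andbT.
  apply/negP => /eqP /rinj /eqP; rewrite nth_uniq //.
  by apply/negP.
have neq t1 t2 : t1 < size c -> t2 < size c -> t1 != t2 -> nth x c t1 != nth x c t2.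
  by move=> h1 h2 h12; rewrite nth_uniq.
case: m mL Hm strict => [|m] mL Hm strict.
  exists 1, (size s); split => //.
  - by apply: (leq_trans _ s3).
  - by apply/negP => /eqP h; rewrite h in s3.
  apply: (H _ _ (nth x c 0)).
  - by rewrite esym; apply: (E1 0); apply: (leq_trans _ s3).
  - exact: E2.
  - by apply: strict => //; rewrite /= ltnS (leq_trans _ s3).
  - by apply: strict; [rewrite /= ltnSn | rewrite -lt0n (leq_trans _ s3)].
  - apply: neq => //; first by rewrite /= ltnS (leq_trans _ s3).
    by apply/negP => /eqP h; rewrite -h in s3.
case: (ltnP m.+1 (size s)) => hm.
  have hm1 : m < size s by apply: ltn_trans (ltnSn m) hm.
  exists m, m.+2; split => //.
  - by rewrite neq_ltn ltnSn orbT.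
  - apply/negP => /andP[/eqP m0 /eqP h]; rewrite m0 /= in h.
    by rewrite -h in s3.
  apply: (H _ _ (nth x c m.+1)).
  - exact: E1 hm1.
  - by rewrite esym; apply: E1.
  - apply: strict; first by rewrite /= ltnS ltnW.
    by rewrite neq_ltn ltnSn.
  - apply: strict; first by rewrite /= ltnS.
    by rewrite neq_ltn ltnSn orbT.
  - apply: neq; [by rewrite /= ltnS ltnW | by rewrite /= ltnS | ].
    by rewrite neq_ltn ltnW.
have ms : m.+1 = size s by apply/eqP; rewrite eqn_leq hm andbT -ltnS.
have m0 : 0 < m by rewrite lt0n; apply/negP => /eqP h; rewrite h in ms; rewrite -ms in s3.
exists 0, m; split => //.
- by rewrite /= ltnS ltnW // -ltnS ms.
- by apply/negP => /eqP h; rewrite h in ms; rewrite -ms in s3.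
- by rewrite /= -ms neq_ltn ltnSn.
apply: (H _ _ (nth x c m.+1)).
- by rewrite ms esym; exact: E2.
- by apply: E1; rewrite -ms.
- by apply: strict.
- apply: strict; first by rewrite /= ltnS ltnW // -ltnS ms.
  by rewrite neq_ltn ltnSn.
- apply: neq => //; first by rewrite /= ltnS ltnW // -ltnS ms.
  by rewrite neq_ltn m0.
Qed.
End G.

Lemma coef_basis (f : nat -> int) N j :
  ((((\sum_(i < N) (f i)%:P * ('X - 1) ^+ i) \Po ('X + 1))`_j) = if (j < N)%N then f j else 0)%R.
Proof.
rewrite rmorph_sum /=.
under eq_bigr => i _ do rewrite rmorphM /= comp_polyC rmorphXn /= rmorphB /= comp_polyX rmorph1 addrK.
rewrite coef_sum; case: ifP => h.
  rewrite (bigD1 (Ordinal h)) //= coefCM coefXn eqxx mulr1 big1 ?addr0 // => t tne.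
  rewrite coefCM coefXn; case: eqP => [it|]; last by rewrite mulr0.
  by move: tne; rewrite -val_eqE /= it eqxx.
rewrite big1 // => t _; rewrite coefCM coefXn; case: eqP => [it|]; last by rewrite mulr0.
by move: (ltn_ord t); rewrite -it h.
Qed.

Section Constr.
Variables (k d : nat) (L : seq nat).
Hypothesis hL : all (fun t => (k <= t) && (t < d)) L.
Hypothesis kd : k <= d.
Local Notation n := (d + size L).

Definition lv (m : nat) := nth 0 L (m - d).
Definition gE : rel 'I_n := fun u v =>
  (u != v) && [|| (u < d) && (v < d), [&& u < d, d <= v & u < lv v]
                | [&& v < d, d <= u & v < lv u]].

Lemma lv_bnd m : d <= m -> m < n -> (k <= lv m) && (lv m < d).
Proof.
move=> dm mn; have h : m - d < size L by move: dm mn; clear; lia.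
exact: (allP hL _ (mem_nth 0 h)).
Qed.

Lemma gE_sym : symmetric gE.
Proof.
move=> u v; rewrite /gE eq_sym; case: (u < d); case: (v < d); case: (d <= u);
  case: (d <= v); case: (u < lv v); case: (v < lv u); by [].
Qed.

Lemma gE_irr : irreflexive gE.
Proof. by move=> u; rewrite /gE eqxx. Qed.

Lemma gE_lt (u w : 'I_n) : gE u w -> u < w -> u < d.
Proof. rewrite /gE => /andP[_ H] uw; move: H uw; clear; lia. Qed.

Lemma gE_chordal : chordal gE.
Proof.
apply: (@peo_chordal _ gE gE_sym (@nat_of_ord _) val_inj).
move=> u v w euw evw uw vw uv.
by rewrite /gE uv /= (gE_lt euw uw) (gE_lt evw vw).
Qed.

Lemma card_pre t : t <= n -> #|[set u : 'I_n | u < t]| = t.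
Proof.
move=> tn.
have inj : injective (fun i : 'I_t => widen_ord tn i).
  by move=> a b /(congr1 val) /= /val_inj.
have -> : [set u : 'I_n | u < t] = [set widen_ord tn i | i in 'I_t].
  apply/setP => u; rewrite inE; apply/idP/imsetP => [ut | [i _ ->]]; last by rewrite /= ltn_ord.
  by exists (Ordinal ut) => //; apply: val_inj.
by rewrite card_imset ?card_ord.
Qed.

Lemma avoid t (S : {set 'I_n}) : #|S| < t -> t <= n ->
  exists2 z : 'I_n, z < t & z \notin S.
Proof.
move=> St tn; have : ~~ ([set u : 'I_n | u < t] \subset S).
  by apply/negP => /subset_leq_card; rewrite card_pre // leqNgt St.
by case/subsetPn => z; rewrite inE => zt zS; exists z.
Qed.

Lemma gE_kconn : k_connected gE k.
Proof.
split; first by rewrite card_ord (leq_trans kd (leq_addr _ _)).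
move=> S hS x y; rewrite !inE => xS yS.
set R := [rel u v | [&& gE u v, u \in ~: S & v \in ~: S]].
have Rsym : symmetric R.
  by move=> u v; rewrite /R /= gE_sym; case: (u \in ~: S); case: (v \in ~: S).
have hSd : #|S| < d by apply: leq_trans hS kd.
have [z0 z0d z0S] := avoid hSd (leq_addr _ _).
have toz (w : 'I_n) : w \notin S -> connect R w z0.
  move=> wS.
  have [z [zd zS wz]] : exists z : 'I_n, [/\ z < d, z \notin S & (z == w) || gE w z].
    case: (ltnP w d) => wd; first by exists w; rewrite eqxx.
    have /andP[kl ld] := lv_bnd wd (ltn_ord w).
    have [z zl zS] := avoid (leq_trans hS kl) (ltnW (leq_trans ld (leq_addr _ _))).
    exists z; split => //.
      by move: zl ld; clear; lia.
    apply/orP; right; rewrite /gE -val_eqE /=; move: zl ld wd; clear; lia.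
  apply: (connect_trans (_ : connect R w z)).
    case/orP: wz => [/eqP -> | h]; first exact: connect0.
    by apply: connect1; rewrite /R /= h !inE wS zS.
  case: (z =P z0) => [-> | /eqP zz0]; first exact: connect0.
  by apply: connect1; rewrite /R /= !inE zS z0S /gE zz0 zd z0d.
apply: connect_trans (toz x xS) _.
by rewrite (sym_connect_sym Rsym); apply: toz.
Qed.

Definition Apre (t : nat) := [set u : 'I_n | u < t].

Lemma pre_clique t : t <= d -> is_clique gE (Apre t).
Proof.
move=> td; apply/cliqueP => u v; rewrite !inE => ut vt uv.
rewrite /gE uv /=; move: ut vt td; clear; lia.
Qed.

Lemma elim_P t : t <= size L ->
  (P gE (Apre (d + t)) = P gE (Apre d) + \sum_(i < t) 'X^(nth 0 L i))%R.
Proof.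
elim: t => [|t IH] tL; first by rewrite big_ord0 addr0 addn0.
have mn : d + t < n by rewrite ltn_add2l.
set vm : 'I_n := Ordinal mn.
have /andP[kl ld] := lv_bnd (leq_addr t d) mn.
have eN : nbh gE (Apre (d + t).+1) vm = Apre (lv (d + t)).
  apply/setP => u; rewrite /nbh !inE /gE -val_eqE /=.
  apply/idP/idP; move: kl ld; clear; lia.
have sv : simplicial gE (Apre (d + t).+1) vm.
  rewrite /simplicial eN inE ltnSn /=; apply: pre_clique; exact: ltnW.
have eR : Apre (d + t).+1 :\ vm = Apre (d + t).
  apply/setP => u; rewrite !inE -val_eqE /=; apply/idP/idP; clear; lia.
rewrite addnS (P_remove gE_sym gE_irr sv) eR IH ?(ltnW tL) // big_ord_recr /= -addrA.
have lvn : lv (d + t) <= n by apply: ltnW; apply: leq_trans ld (leq_addr _ _).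
by rewrite eN (card_pre lvn) /lv addKn.
Qed.

Lemma P_constr :
  (P gE setT = \sum_(t < d) 'X^t + \sum_(x <- L) 'X^x)%R.
Proof.
have -> : [set: 'I_n] = Apre (d + size L).
  by apply/setP => u; rewrite !inE ltn_ord.
rewrite elim_P // (P_clique gE_sym gE_irr (card_pre (leq_addr _ _)) (pre_clique (leqnn d))).
by rewrite (big_nth 0) big_mkord.
Qed.
End Constr.

Lemma iter_addr (x : {poly int}) m : iter m (fun y => x + y)%R 0%R = (x *+ m)%R.
Proof. by elim: m => [|m IH]; rewrite ?mulr0n //= IH mulrS. Qed.

Lemma big_iota0 (F : nat -> {poly int}) d :
  (\sum_(t <- iota 0 d) F t = \sum_(t < d) F t)%R.
Proof. by rewrite -{1}(subn0 d) -/(index_iota 0 d) big_mkord. Qed.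

Theorem theorem1p1 (k d : nat) (c : seq nat) :
  1 <= d -> size c = d ->
  ((exists (n : nat) (e : rel 'I_n),
      [/\ simple_graph e, k_connected e k, chordal e & clique_vector e = c])
   <->
   [/\ (forall i, i < d -> (0 < ((bpoly c)`_i)%R)%R),
       k <= d &
       (forall i, i < k -> ((bpoly c)`_i)%R = 1%R)]).
Proof.
move=> d1 sc; split.
  case=> n [e [[esym eirr] [kn kc] ch cv]].
  have kA : kconn e setT k.
    split; first by rewrite cardsT.
    by move=> S hS; rewrite setTD; apply: kc.
  have [h1 h2 h3] := forward_main esym eirr ch kA.
  have dE : clique_number e = d by rewrite -sc -cv /clique_vector size_map size_iota.
  rewrite -cv -P_bpoly -dE; split => //.
case=> hb kd h1.
set b := bpoly c.
pose bn t := `|(b`_t)%R|%N.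
have bnE t : t < d -> ((bn t)%:Z = b`_t)%R.
  by move=> td; rewrite /bn gez0_abs // ltW // hb.
have bnpos t : t < d -> 0 < bn t.
  by move=> td; rewrite -(ltz_nat) bnE // hb.
pose L := flatten [seq nseq (bn t).-1 t | t <- iota 0 d].
have hL : all (fun t => (k <= t) && (t < d)) L.
  apply/allP => t /flatten_mapP [t0]; rewrite mem_iota add0n => /andP[_ t0d].
  rewrite mem_nseq => /andP[pos /eqP ->].
  rewrite t0d andbT leqNgt; apply/negP => t0k.
  by move: pos; rewrite /bn /b h1.
exists (d + size L), (@gE d L); split.
- by split; [exact: gE_sym | exact: gE_irr].
- exact: gE_kconn hL kd.
- exact: gE_chordal.
set e := @gE d L.
have bsum : (b = \sum_(t < d) 'X^t *+ bn t)%R.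
  apply/polyP => j; rewrite [RHS]coef_sum.
  under [RHS]eq_bigr => t _ do rewrite coefMn coefXn.
  case: (ltnP j d) => jd.
    rewrite (bigD1 (Ordinal jd)) //= eqxx big1 ?addr0.
      by rewrite -bnE // -natz.
    move=> t tne; case: eqP => [jt|]; last by rewrite mul0rn.
    by move: tne; rewrite -val_eqE /= jt eqxx.
  rewrite big1; last first.
    move=> t _; case: eqP => [jt|]; last by rewrite mul0rn.
    by move: (ltn_ord t); rewrite -jt ltnNge jd.
  rewrite /b /bpoly coef_sum big1 // => i _; rewrite coefCM.
  rewrite [((('X - 1) ^+ i)`_j)%R]nth_default ?mulr0 // -polyC1 size_exp_XsubC.
  by apply: leq_trans jd; rewrite -sc.
have PT : P e setT = b.
  rewrite (P_constr hL) bsum big_flatten big_map /=.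
  rewrite big_iota0 -big_split /=; apply: eq_bigr => t _.
  by rewrite big_nseq iter_addr -mulrS prednK // bnpos.
have cvals j : j < (d + size L).+1 ->
    ((cl e setT j.+1)%:Z = if (j < d)%N then (nth 0 c j)%:Z else 0)%R.
  move=> hj.
  have := congr1 (fun p => ((p \Po ('X + 1))`_j)%R) PT.
  rewrite /= /P /b /bpoly (coef_basis (fun i => (cl e setT i.+1)%:Z)%R).
  by rewrite (coef_basis (fun i => (nth 0 c i)%:Z)%R) card_ord hj sc.
have dK : clique_number e = d.
  apply/eqP; rewrite eqn_leq; apply/andP; split.
    apply/bigmax_leqP => S cS; rewrite leqNgt; apply/negP => dS.
    have Sn : #|S| <= d + size L by have := max_card (mem S); rewrite card_ord.
    have S0 : 0 < #|S| by apply: leq_ltn_trans dS.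
    have := cvals #|S|.-1; rewrite prednK // (leq_trans Sn (leqnSn _)) => /(_ isT).
    rewrite leqNgt dS /= => /(congr1 absz) /= hC.
    move/eqP: hC; rewrite /cl cards_eq0 => /eqP hC.
    have : S \in Cl e setT #|S| by rewrite inE subsetT cS eqxx.
    by rewrite hC inE.
  have := leq_bigmax_cond (F := fun S => #|S|) (P := fun S => is_clique e S) _ (pre_clique L (leqnn d)).
  by rewrite /Apre card_pre // leq_addr.
apply: (@eq_from_nth _ 0); first by rewrite size_map size_iota dK sc.
move=> i; rewrite size_map size_iota dK => id.
rewrite (nth_map 0) ?size_iota ?dK // nth_iota ?dK // add1n.
have := cvals i; rewrite id ltnS (leq_trans (ltnW id) (leq_addr _ _)) => /(_ isT) [] <-.
by apply: eq_card => S; rewrite !inE subsetT.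
Qed.
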